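(* There exists a closed, non-separable linear subspace $M\subset\ell^\infty$ such that every non-zero $x\in M$ has exactly countably infinitely many accumulation points, i.e. $M\subset L(\omega)\cup\{0\}$.
   Context: $\ell^\infty$ is the Banach space of bounded real sequences with the sup norm. For $x\in\ell^\infty$, $L_x$ denotes the set of accumulation points (subsequential limits) of $x$. $\omega$ denotes the cardinality of $\mathbb{N}$, and $L(\omega)=\{x\in\ell^\infty: |L_x|=\omega\}$. *)

(* Defs.v *)
From Stdlib Require Import Reals.
Open Scope R_scope.

Definition rseq := nat -> R.

Definition bounded (x : rseq) : Prop :=
  exists B : R, forall n : nat, Rabs (x n) <= B.

Definition sup_close (x y : rseq) (eps : R) : Prop :=
  forall n : nat, Rabs (x n - y n) <= eps.

Definition linear_subspace (M : rseq -> Prop) : Prop :=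
  (forall x, M x -> bounded x) /\
  M (fun _ => 0) /\
  (forall x y, M x -> M y -> M (fun n => x n + y n)) /\
  (forall (c : R) x, M x -> M (fun n => c * x n)).

Definition sup_closed (M : rseq -> Prop) : Prop :=
  forall (u : nat -> rseq) (y : rseq),
    (forall k, M (u k)) -> bounded y ->
    (forall eps, eps > 0 -> exists N, forall k, (k >= N)%nat -> sup_close (u k) y eps) ->
    M y.

(* separable: has a countable subset dense in the sup norm.
   (M is nonempty here, so a countable dense subset can be enumerated by nat.) *)
Definition separable (M : rseq -> Prop) : Prop :=
  exists d : nat -> rseq,
    (forall k, M (d k)) /\
    (forall x, M x -> forall eps, eps > 0 -> exists k, sup_close x (d k) eps).

Definition acc_point (x : rseq) (a : R) : Prop :=
  exists phi : nat -> nat,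
    (forall k, (phi k < phi (S k))%nat) /\ Un_cv (fun k => x (phi k)) a.

Definition countably_infinite (S : R -> Prop) : Prop :=
  exists f : nat -> R,
    (forall i j, f i = f j -> i = j) /\
    (forall a, S a <-> exists i, f i = a).

Definition L_omega (x : rseq) : Prop :=
  bounded x /\ countably_infinite (acc_point x).

(* Main.v *)
Require Import Defs.
From Stdlib Require Import Reals.
Open Scope R_scope.
From Stdlib Require Import Lra Lia List Cantor ClassicalEpsilon Classical FunctionalExtensionality FinFun.


Fixpoint pref (b : nat -> bool) (k : nat) : nat :=
  match k with O => 1%nat | S k => (2 * pref b k + (if b k then 1 else 0))%nat end.
Definition on (b : nat -> bool) (n : nat) : Prop := exists k, n = pref b k.

Lemma pref_pos b k : (1 <= pref b k)%nat.
Proof. induction k; simpl; [lia|destruct (b k); lia]. Qed.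
Lemma pref_lt b k : (pref b k < pref b (S k))%nat.
Proof. pose proof (pref_pos b k). simpl; destruct (b k); lia. Qed.
Lemma pref_strict b k k' : (k < k')%nat -> (pref b k < pref b k')%nat.
Proof.
  induction 1. apply pref_lt. pose proof (pref_lt b m). lia.
Qed.
Lemma pref_ge b k : (k <= pref b k)%nat.
Proof. induction k. simpl; lia. pose proof (pref_lt b k); lia. Qed.
Lemma pref_strict_inv b k k' : (pref b k < pref b k')%nat -> (k < k')%nat.
Proof.
  intros H. destruct (Nat.lt_ge_cases k k') as [h|h]; auto.
  destruct (Nat.eq_dec k k') as [->|]; [lia|].
  assert (k' < k)%nat by lia. pose proof (pref_strict b _ _ H0); lia.
Qed.
Lemma pref_inj2 b b' : forall k j, pref b k = pref b' j ->
  k = j /\ forall i, (i < k)%nat -> b i = b' i.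
Proof.
  induction k; intros j H.
  - destruct j; [split; [auto|intros; lia]|].
    simpl in H. pose proof (pref_pos b' j). destruct (b' j); lia.
  - destruct j.
    + simpl in H. pose proof (pref_pos b k). destruct (b k); lia.
    + simpl in H.
      assert (E: pref b k = pref b' j /\ b k = b' j).
      { destruct (b k), (b' j); split; auto; lia. }
      destruct E as [E1 E2]. destruct (IHk j E1) as [-> IH2].
      split; auto. intros i Hi. destruct (Nat.eq_dec i j) as [->|]; auto.
      apply IH2; lia.
Qed.

Lemma pigeon {A} (l : list A) (Q : A -> R -> nat -> Prop) :
  (forall a e e' K K', e <= e' -> (K' <= K)%nat -> Q a e K -> Q a e' K') ->
  (forall e, e > 0 -> forall K, exists a, In a l /\ Q a e K) ->
  exists a, In a l /\ forall e, e > 0 -> forall K, Q a e K.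
Proof.
  intros Hm. induction l as [|a l IH]; intros H.
  - destruct (H 1 ltac:(lra) 0%nat) as [a [[] _]].
  - destruct (classic (forall e, e > 0 -> forall K, Q a e K)) as [Ha|Ha].
    + exists a; split; [left; auto|auto].
    + apply not_all_ex_not in Ha. destruct Ha as [e0 Ha].
      apply imply_to_and in Ha. destruct Ha as [He0 Ha].
      apply not_all_ex_not in Ha. destruct Ha as [K0 Ha].
      destruct IH as [a' [Ha' Hq]].
      { intros e He K. destruct (H (Rmin e e0) ltac:(apply Rmin_glb_lt; lra) (Nat.max K K0))
          as [a' [[<-|Hin] Hq]].
        - exfalso. apply Ha. eapply Hm; [apply Rmin_r| |exact Hq]. lia.
        - exists a'; split; auto. eapply Hm; [apply Rmin_l| |exact Hq]. lia. }
      exists a'; split; [right; auto|auto].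
Qed.

Lemma least (P : nat -> Prop) : (exists n, P n) -> exists n, P n /\ forall m, P m -> (n <= m)%nat.
Proof.
  intros [n Hn]. apply NNPP; intros H.
  assert (forall k m, (m <= k)%nat -> ~ P m).
  { induction k; intros m Hm Pm.
    - apply H; exists m; split; auto; lia.
    - apply H; exists m; split; auto. intros m' Pm'.
      destruct (Nat.le_gt_cases m m'); auto. exfalso; apply (IHk m'); auto; lia. }
  apply (H0 n n); auto.
Qed.

Lemma count_inf (SS : R -> Prop) (g h : nat -> R) :
  (forall a, SS a -> exists i, g i = a) ->
  (forall i j, h i = h j -> i = j) -> (forall i, SS (h i)) ->
  countably_infinite SS.
Proof.
  intros Hg Hh HS.
  set (good := fun n => SS (g n) /\ forall j, (j < n)%nat -> g j <> g n).
  assert (Hgood: forall a, SS a -> exists n, good n /\ g n = a /\ forall m, g m = a -> (n <= m)%nat).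
  { intros a Sa. destruct (least (fun n => g n = a) (Hg a Sa)) as [n [Hn Hl]].
    exists n; split; [|auto]. split; [rewrite Hn; auto|].
    intros j Hj E. specialize (Hl j ltac:(congruence)). lia. }
  assert (Hinf: forall K, exists n, good n /\ (K <= n)%nat).
  { intros K. set (l := map g (seq 0 K)).
    assert (exists i, ~ In (h i) l) as [i0 Hi0].
    { apply NNPP; intros Hc.
      assert (incl (map h (seq 0 (S (length l)))) l).
      { intros z Hz. apply in_map_iff in Hz. destruct Hz as [i [<- _]].
        apply NNPP; intros Hn; apply Hc; exists i; auto. }
      apply NoDup_incl_length in H.
      - rewrite length_map, length_seq in H; lia.
      - apply Injective_map_NoDup; [intros x y; apply Hh| apply seq_NoDup]. }
    destruct (Hgood (h i0) (HS i0)) as [n [Gn [En _]]].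
    exists n; split; auto. destruct (Nat.le_gt_cases K n); auto.
    exfalso; apply Hi0. unfold l. rewrite <- En. apply in_map, in_seq. lia. }
  assert (Hnext: forall k, exists n, (good n /\ (k <= n)%nat) /\ forall m, good m /\ (k <= m)%nat -> (n <= m)%nat).
  { intros k. apply least. destruct (Hinf k) as [n Hn]; exists n; auto. }
  set (nextg := fun k => proj1_sig (constructive_indefinite_description _ (Hnext k))).
  assert (Hng: forall k, (good (nextg k) /\ (k <= nextg k)%nat) /\ forall m, good m /\ (k <= m)%nat -> (nextg k <= m)%nat).
  { intros k. unfold nextg. destruct (constructive_indefinite_description _ (Hnext k)); simpl; auto. }
  set (e := fix e (i : nat) : nat := match i with O => nextg O | S i => nextg (S (e i)) end).
  assert (He1: forall i, good (e i)).
  { destruct i; simpl; apply Hng. }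
  assert (He2: forall i, (e i < e (S i))%nat).
  { intros i. change (e (S i)) with (nextg (S (e i))). destruct (Hng (S (e i))) as [[_ H] _]. lia. }
  assert (He3: forall i j, (i < j)%nat -> (e i < e j)%nat).
  { intros i j H; induction H; auto. specialize (He2 m); lia. }
  assert (He4: forall i, (i <= e i)%nat).
  { induction i; [lia|]. specialize (He2 i); lia. }
  exists (fun i => g (e i)). split.
  - intros i j E. destruct (Nat.lt_total i j) as [H|[H|H]]; auto; exfalso.
    + apply (proj2 (He1 j) (e i)); auto.
    + apply (proj2 (He1 i) (e j)); auto.
  - intros a; split.
    + intros Sa. destruct (Hgood a Sa) as [n [Gn [En _]]].
      assert (exists i, e i = n) as [i Ei].
      { apply NNPP; intros Hc.
        assert (forall i, (e i <= n)%nat).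
        { induction i.
          - simpl. apply Hng. split; auto; lia.
          - change (e (S i)) with (nextg (S (e i))). apply Hng. split; auto.
            destruct (Nat.eq_dec (e i) n); [exfalso; apply Hc; eauto|lia]. }
        specialize (H (S n)); specialize (He4 (S n)); lia. }
      exists i; rewrite Ei; auto.
    + intros [i <-]. apply He1.
Qed.

Definition Wt (t : nat) : R := match t with O => 1 | S j => 1 + / (INR j + 1) end.
Definition w (m : nat) : R := Wt (S (fst (Cantor.of_nat m))).

Lemma inv_pos_le1 j : 0 < / (INR j + 1) <= 1.
Proof.
  pose proof (pos_INR j). split. apply Rinv_0_lt_compat; lra.
  rewrite <- Rinv_1. apply Rinv_le_contravar; lra.
Qed.
Lemma Wt_bounds t : 1 <= Wt t <= 2.
Proof. destruct t; simpl; [lra|]. pose proof (inv_pos_le1 t); lra. Qed.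
Lemma w_bounds m : 1 <= w m <= 2.
Proof. apply Wt_bounds. Qed.
Lemma w0 : w 0 = 2.
Proof. unfold w; simpl. lra. Qed.

Definition P0 (y : rseq) : Prop := forall eps, eps > 0 -> exists L : list (nat -> bool), exists N,
  forall n, (N <= n)%nat -> (forall b, In b L -> ~ on b n) -> Rabs (y n) <= eps.
Definition Q0 (y : rseq) : Prop := forall b eps, eps > 0 -> exists K, forall n n',
  (K <= n)%nat -> (K <= n')%nat -> on b n -> on b n' -> Rabs (y n - y n') <= eps.
Definition M0 (y : rseq) : Prop := Defs.bounded y /\ P0 y /\ Q0 y.
Definition T (y : rseq) : rseq := fun p => y (fst (Cantor.of_nat p)) * w (snd (Cantor.of_nat p)).
Definition MM (x : rseq) : Prop := exists y, M0 y /\ forall p, x p = T y p.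

Lemma T_pair y n m : T y (Cantor.to_nat (n, m)) = y n * w m.
Proof. unfold T. rewrite Cantor.cancel_of_to. reflexivity. Qed.

Lemma eq_eps a b : (forall e, e > 0 -> Rabs (a - b) <= e) -> a = b.
Proof.
  intros H. destruct (Req_dec (a - b) 0) as [h|h]; [lra|].
  pose proof (Rabs_pos_lt _ h). specialize (H (Rabs (a-b) / 2) ltac:(lra)). lra.
Qed.

Lemma M0_add y1 y2 : M0 y1 -> M0 y2 -> M0 (fun n => y1 n + y2 n).
Proof.
  intros [[B1 HB1] [P1 Q1]] [[B2 HB2] [P2 Q2]]. split; [|split].
  - exists (B1 + B2). intros n. eapply Rle_trans; [apply Rabs_triang|]. specialize (HB1 n); specialize (HB2 n); lra.
  - intros e He. destruct (P1 (e/2) ltac:(lra)) as [L1 [N1 H1]]. destruct (P2 (e/2) ltac:(lra)) as [L2 [N2 H2]].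
    exists (L1 ++ L2), (Nat.max N1 N2). intros n Hn Hb.
    eapply Rle_trans; [apply Rabs_triang|].
    assert (Rabs (y1 n) <= e/2). { apply H1; [lia|]. intros b Hb'; apply Hb; apply in_or_app; auto. }
    assert (Rabs (y2 n) <= e/2). { apply H2; [lia|]. intros b Hb'; apply Hb; apply in_or_app; auto. }
    lra.
  - intros b e He. destruct (Q1 b (e/2) ltac:(lra)) as [K1 H1]. destruct (Q2 b (e/2) ltac:(lra)) as [K2 H2].
    exists (Nat.max K1 K2). intros n n' Hn Hn' On On'.
    replace (y1 n + y2 n - (y1 n' + y2 n')) with ((y1 n - y1 n') + (y2 n - y2 n')) by ring.
    eapply Rle_trans; [apply Rabs_triang|].
    assert (Rabs (y1 n - y1 n') <= e/2) by (apply H1; auto; lia).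
    assert (Rabs (y2 n - y2 n') <= e/2) by (apply H2; auto; lia). lra.
Qed.

Lemma M0_scal c y : M0 y -> M0 (fun n => c * y n).
Proof.
  intros [[B HB] [P Q]]. pose proof (Rabs_pos c) as Hc0. split; [|split].
  - exists (Rabs c * B). intros n. rewrite Rabs_mult. apply Rmult_le_compat_l; auto.
  - intros e He. destruct (P (e / (Rabs c + 1))) as [L [N H]].
    { apply Rdiv_lt_0_compat; lra. }
    exists L, N. intros n Hn Hb. rewrite Rabs_mult.
    specialize (H n Hn Hb).
    apply Rle_trans with (Rabs c * (e / (Rabs c + 1))). apply Rmult_le_compat_l; auto.
    apply Rle_trans with ((Rabs c + 1) * (e / (Rabs c + 1))).
    apply Rmult_le_compat_r; [apply Rlt_le, Rdiv_lt_0_compat; lra| lra].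
    right. field. lra.
  - intros b e He. destruct (Q b (e / (Rabs c + 1))) as [K H].
    { apply Rdiv_lt_0_compat; lra. }
    exists K. intros n n' Hn Hn' On On'.
    replace (c * y n - c * y n') with (c * (y n - y n')) by ring. rewrite Rabs_mult.
    specialize (H n n' Hn Hn' On On').
    apply Rle_trans with (Rabs c * (e / (Rabs c + 1))). apply Rmult_le_compat_l; auto.
    apply Rle_trans with ((Rabs c + 1) * (e / (Rabs c + 1))).
    apply Rmult_le_compat_r; [apply Rlt_le, Rdiv_lt_0_compat; lra| lra].
    right. field. lra.
Qed.

Lemma M0_closed z : Defs.bounded z ->
  (forall e, e > 0 -> exists v, M0 v /\ forall n, Rabs (v n - z n) <= e) -> M0 z.
Proof.
  intros Hb H. split; [auto|split].
  - intros e He. destruct (H (e/2) ltac:(lra)) as [v [[_ [P _]] Hv]].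
    destruct (P (e/2) ltac:(lra)) as [L [N HP]]. exists L, N. intros n Hn Hbn.
    specialize (HP n Hn Hbn). specialize (Hv n).
    replace (z n) with (v n - (v n - z n)) by ring.
    eapply Rle_trans; [apply Rabs_triang|]. rewrite Rabs_Ropp. lra.
  - intros b e He. destruct (H (e/3) ltac:(lra)) as [v [[_ [_ Q]] Hv]].
    destruct (Q b (e/3) ltac:(lra)) as [K HQ]. exists K. intros n n' Hn Hn' On On'.
    specialize (HQ n n' Hn Hn' On On'). pose proof (Hv n). pose proof (Hv n').
    replace (z n - z n') with ((v n - v n') - (v n - z n) + (v n' - z n')) by ring.
    eapply Rle_trans; [apply Rabs_triang|].
    eapply Rle_trans; [apply Rplus_le_compat_r; apply Rabs_triang|]. rewrite Rabs_Ropp. lra.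
Qed.

Lemma MM_linear : linear_subspace MM.
Proof.
  split; [|split; [|split]].
  - intros x [y [[[B HB] _] Hx]]. exists (B * 2). intros p. rewrite Hx. unfold T.
    rewrite Rabs_mult. pose proof (w_bounds (snd (Cantor.of_nat p))).
    rewrite (Rabs_right (w _)) by lra. specialize (HB (fst (Cantor.of_nat p))).
    pose proof (Rabs_pos (y (fst (Cantor.of_nat p)))).
    apply Rmult_le_compat; lra.
  - exists (fun _ => 0). split.
    + split; [exists 0; intros; rewrite Rabs_R0; lra|split].
      * intros e He; exists nil, 0%nat; intros; rewrite Rabs_R0; lra.
      * intros b e He; exists 0%nat; intros; replace (0-0) with 0 by ring; rewrite Rabs_R0; lra.
    + intros p; unfold T; ring.
  - intros x1 x2 [y1 [H1 E1]] [y2 [H2 E2]]. exists (fun n => y1 n + y2 n). split.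
    apply M0_add; auto. intros p; rewrite E1, E2; unfold T; ring.
  - intros c x [y [H E]]. exists (fun n => c * y n). split.
    apply M0_scal; auto. intros p; rewrite E; unfold T; ring.
Qed.

Lemma MM_closed : sup_closed MM.
Proof.
  intros u y Hu [B HB] Hlim.
  set (z := fun n => y (Cantor.to_nat (n, 0%nat)) / 2).
  assert (Hz: forall e, e > 0 -> exists v, M0 v /\ (forall n, Rabs (v n - z n) <= e) /\
             forall p, Rabs (y p - T v p) <= e).
  { intros e He. destruct (Hlim e He) as [N HN]. specialize (HN N (le_n N)).
    destruct (Hu N) as [v [Hv Ev]]. exists v. split; [auto|split].
    - intros n. specialize (HN (Cantor.to_nat (n, 0%nat))). rewrite Ev, T_pair, w0 in HN.
      unfold z. replace (v n - y (Cantor.to_nat (n, 0%nat)) / 2) with ((v n * 2 - y (Cantor.to_nat (n, 0%nat))) / 2) by field.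
      unfold Rdiv. rewrite Rabs_mult, (Rabs_right (/2)) by lra. lra.
    - intros p. specialize (HN p). rewrite Ev in HN. rewrite <- Rabs_Ropp.
      replace (- (y p - T v p)) with (T v p - y p) by ring. auto. }
  assert (HM: M0 z).
  { apply M0_closed.
    - exists B. intros n. unfold z. unfold Rdiv. rewrite Rabs_mult, (Rabs_right (/2)) by lra.
      specialize (HB (Cantor.to_nat (n, 0%nat))). pose proof (Rabs_pos (y (Cantor.to_nat (n, 0%nat)))). lra.
    - intros e He. destruct (Hz e He) as [v [Hv [H1 _]]]. eauto. }
  exists z. split; auto. intros p. apply eq_eps. intros e He.
  destruct (Hz (e/3) ltac:(lra)) as [v [_ [H1 H2]]].
  specialize (H2 p). specialize (H1 (fst (Cantor.of_nat p))).
  pose proof (w_bounds (snd (Cantor.of_nat p))).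
  replace (y p - T z p) with ((y p - T v p) + (v (fst (Cantor.of_nat p)) - z (fst (Cantor.of_nat p))) * w (snd (Cantor.of_nat p))) by (unfold T; ring).
  eapply Rle_trans; [apply Rabs_triang|]. rewrite Rabs_mult, (Rabs_right (w _)) by lra.
  assert (Rabs (v (fst (Cantor.of_nat p)) - z (fst (Cantor.of_nat p))) * w (snd (Cantor.of_nat p)) <= e/3 * 2).
  { apply Rmult_le_compat; try lra. apply Rabs_pos. }
  lra.
Qed.

Definition ind (b : nat -> bool) : rseq :=
  fun n => if excluded_middle_informative (on b n) then 1 else 0.

Lemma ind_M0 b : M0 (ind b).
Proof.
  split; [|split].
  - exists 1. intros n; unfold ind; destruct excluded_middle_informative;
      [rewrite Rabs_R1|rewrite Rabs_R0]; lra.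
  - intros e He. exists (b :: nil), 0%nat. intros n _ Hn. unfold ind.
    destruct excluded_middle_informative as [h|h]; [exfalso; apply (Hn b); [left; auto|auto]|].
    rewrite Rabs_R0; lra.
  - intros b' e He. destruct (classic (b' = b)) as [->|Hne].
    + exists 0%nat. intros n n' _ _ On On'. unfold ind.
      do 2 (destruct excluded_middle_informative; try contradiction).
      replace (1 - 1) with 0 by ring. rewrite Rabs_R0; lra.
    + assert (exists i, b' i <> b i) as [i Hi].
      { apply NNPP; intros Hc; apply Hne; apply functional_extensionality; intros i.
        apply NNPP; intros Hi; apply Hc; eauto. }
      assert (Hoff: forall n, (pref b' (S i) <= n)%nat -> on b' n -> ind b n = 0).
      { intros n Hn [k ->]. unfold ind. destruct excluded_middle_informative as [[j Hj]|]; auto.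
        exfalso. destruct (pref_inj2 b' b k j Hj) as [_ Hb].
        assert (S i <= k)%nat.
        { destruct (Nat.le_gt_cases (S i) k); auto. pose proof (pref_strict b' k (S i) H). lia. }
        apply Hi, Hb; lia. }
      exists (pref b' (S i)). intros n n' Hn Hn' On On'. rewrite (Hoff n), (Hoff n'); auto.
      replace (0 - 0) with 0 by ring. rewrite Rabs_R0; lra.
Qed.

Fixpoint st (d : nat -> rseq) (k : nat) : nat :=
  match k with
  | O => 1%nat
  | S k => (2 * st d k + (if Rle_dec 1 (d k (Cantor.to_nat (2 * st d k, 0)%nat)) then 1 else 0))%nat
  end.
Definition bd (d : nat -> rseq) (k : nat) : bool :=
  if Rle_dec 1 (d k (Cantor.to_nat (2 * st d k, 0)%nat)) then true else false.

Lemma pref_bd d k : pref (bd d) k = st d k.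
Proof.
  induction k; simpl; auto. rewrite IHk. unfold bd. destruct Rle_dec; reflexivity.
Qed.

Lemma MM_nonsep : ~ separable MM.
Proof.
  intros [d [_ Hd]].
  set (b := bd d).
  assert (Hx: MM (T (ind b))) by (exists (ind b); split; [apply ind_M0|auto]).
  destruct (Hd _ Hx (1/3) ltac:(lra)) as [k Hk].
  set (q := st d k). set (p := Cantor.to_nat (2 * q, 0)%nat).
  specialize (Hk p). unfold p in Hk. rewrite T_pair, w0 in Hk.
  destruct (Rle_dec 1 (d k (Cantor.to_nat (2 * q, 0)%nat))) as [h|h].
  - assert (ind b (2 * q)%nat = 0).
    { unfold ind. destruct excluded_middle_informative as [[j Hj]|]; auto. exfalso.
      assert (Eb: bd d k = true) by (unfold bd; fold q; destruct Rle_dec; [auto|contradiction]).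
      assert (E1: pref (bd d) k = q) by (unfold q; apply pref_bd).
      assert (E2: pref (bd d) (S k) = (2 * pref (bd d) k + (if bd d k then 1 else 0))%nat) by reflexivity.
      rewrite Eb, E1 in E2. unfold b in Hj.
      pose proof (pref_pos (bd d) k).
      assert (k < j)%nat by (apply (pref_strict_inv (bd d)); lia).
      assert (j < S k)%nat by (apply (pref_strict_inv (bd d)); lia). lia. }
    rewrite H in Hk. replace (0 * 2 - d k (Cantor.to_nat (2 * q, 0)%nat)) with (- d k (Cantor.to_nat (2 * q, 0)%nat)) in Hk by ring.
    rewrite Rabs_Ropp in Hk. pose proof (Rle_abs (d k (Cantor.to_nat (2 * q, 0)%nat))). lra.
  - assert (ind b (2 * q)%nat = 1).
    { unfold ind. destruct excluded_middle_informative as [|hn]; auto. exfalso. apply hn.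
      assert (Eb: bd d k = false) by (unfold bd; fold q; destruct Rle_dec; [contradiction|auto]).
      assert (E1: pref (bd d) k = q) by (unfold q; apply pref_bd).
      assert (E2: pref (bd d) (S k) = (2 * pref (bd d) k + (if bd d k then 1 else 0))%nat) by reflexivity.
      rewrite Eb, E1 in E2. exists (S k). unfold b. lia. }
    rewrite H in Hk. pose proof (Rle_abs (1 * 2 - d k (Cantor.to_nat (2 * q, 0)%nat))). lra.
Qed.

Lemma Wcl t : (forall e, e > 0 -> exists m, Rabs (w m - t) < e) -> exists s, Wt s = t.
Proof.
  intros H. destruct (Req_dec t 1) as [->|Ht]; [exists 0%nat; reflexivity|].
  assert (Hd: Rabs (t - 1) > 0) by (apply Rabs_pos_lt; lra).
  set (d := Rabs (t - 1)) in *.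
  destruct (archimed_cor1 (d/2) ltac:(lra)) as [J [HJ HJ0]].
  destruct (pigeon (seq 0 J) (fun j e (_:nat) => Rabs (Wt (S j) - t) < e)) as [j [_ Hj]].
  - intros; lra.
  - intros e He K. destruct (H (Rmin e (d/2)) ltac:(apply Rmin_glb_lt; lra)) as [m Hm].
    exists (fst (Cantor.of_nat m)). unfold w in Hm. set (j := fst (Cantor.of_nat m)) in *.
    split; [|pose proof (Rmin_l e (d/2)); lra].
    apply in_seq. split; [lia|]. destruct (Nat.lt_ge_cases j J); [lia|exfalso].
    assert (/ (INR j + 1) <= / INR J).
    { apply Rinv_le_contravar. apply lt_0_INR; lia. apply le_INR in H0. lra. }
    pose proof (inv_pos_le1 j). pose proof (Rmin_r e (d/2)).
    simpl in Hm. unfold d in *.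
    assert (Htri: Rabs (t - 1) <= Rabs (t - (1 + / (INR j + 1))) + Rabs (/ (INR j + 1))).
    { replace (t - 1) with ((t - (1 + / (INR j + 1))) + / (INR j + 1)) by ring. apply Rabs_triang. }
    rewrite (Rabs_right (/ (INR j + 1))) in Htri by lra.
    rewrite (Rabs_minus_sym t (1 + _)) in Htri. lra.
  - exists (S j). apply eq_eps. intros e He. left. apply Hj; auto.
Qed.

Lemma scaled c a : a <> 0 -> (forall e, e > 0 -> exists m, Rabs (c * w m - a) < e) ->
  exists s, a = c * Wt s.
Proof.
  intros Ha H. assert (Hc: c <> 0).
  { intros ->. destruct (H (Rabs a) (Rabs_pos_lt _ Ha)) as [m Hm].
    replace (0 * w m - a) with (- a) in Hm by ring. rewrite Rabs_Ropp in Hm. lra. }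
  pose proof (Rabs_pos_lt _ Hc).
  destruct (Wcl (a / c)) as [s Hs].
  - intros e He. destruct (H (e * Rabs c) ltac:(apply Rmult_lt_0_compat; lra)) as [m Hm].
    exists m. replace (w m - a / c) with ((c * w m - a) * / c) by (field; auto).
    rewrite Rabs_mult, Rabs_inv.
    apply Rmult_lt_reg_r with (Rabs c); auto.
    rewrite Rmult_assoc, Rinv_l by lra. lra.
  - exists s. rewrite Hs. field. auto.
Qed.

Definition climit (y : rseq) (b : nat -> bool) : R :=
  epsilon (inhabits 0) (fun l => Un_cv (fun k => y (pref b k)) l).

Lemma climit_spec y b : Q0 y -> Un_cv (fun k => y (pref b k)) (climit y b).
Proof.
  intros HQ. unfold climit. apply epsilon_spec.
  assert (Cauchy_crit (fun k => y (pref b k))).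
  { intros e He. destruct (HQ b (e/2) ltac:(lra)) as [K HK]. exists K.
    intros n m Hn Hm. unfold R_dist.
    assert (Rabs (y (pref b n) - y (pref b m)) <= e/2).
    { apply HK. pose proof (pref_ge b n); lia. pose proof (pref_ge b m); lia.
      exists n; auto. exists m; auto. }
    lra. }
  destruct (R_complete _ H) as [l Hl]. eauto.
Qed.

Lemma to_nat_lt a b : (Cantor.to_nat (a, b) < Cantor.to_nat (a, S b))%nat.
Proof.
  pose proof (Cantor.to_nat_spec a b). pose proof (Cantor.to_nat_spec a (S b)). nia.
Qed.
Lemma to_nat_mono a b b' : (b < b')%nat -> (Cantor.to_nat (a, b) < Cantor.to_nat (a, b'))%nat.
Proof.
  induction 1. apply to_nat_lt. pose proof (to_nat_lt a m). lia.
Qed.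

Lemma acc_L_omega y x : M0 y -> (forall p, x p = T y p) -> (exists n, x n <> 0) -> L_omega x.
Proof.
  intros HM Ex [p0 Hp0]. split.
  { apply (proj1 MM_linear). exists y; auto. }
  destruct HM as [Hby [HP HQ]].
  set (n0 := fst (Cantor.of_nat p0)).
  assert (Hy0: y n0 <> 0).
  { intros E. apply Hp0. rewrite Ex. unfold T. fold n0. rewrite E. ring. }
  assert (HPk: forall k : nat, exists L : list (nat -> bool), exists N, forall n, (N <= n)%nat ->
            (forall b, In b L -> ~ on b n) -> Rabs (y n) <= / (INR k + 1)).
  { intros k. apply HP. apply inv_pos_le1. }
  set (Lf := fun k => proj1_sig (constructive_indefinite_description _ (HPk k))).
  assert (HLf: forall k, exists N, forall n, (N <= n)%nat ->
            (forall b, In b (Lf k) -> ~ on b n) -> Rabs (y n) <= / (INR k + 1)).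
  { intros k. unfold Lf. destruct (constructive_indefinite_description _ (HPk k)); auto. }
  set (dflt := fun _ : nat => true).
  set (g := fun e : nat =>
    let a := fst (Cantor.of_nat e) in let r := snd (Cantor.of_nat e) in
    let r1 := fst (Cantor.of_nat r) in let t := snd (Cantor.of_nat r) in
    match a with
    | O => y r1 * Wt t
    | 1%nat => climit y (nth (snd (Cantor.of_nat r1)) (Lf (fst (Cantor.of_nat r1))) dflt) * Wt t
    | _ => 0 end).
  apply (count_inf _ g (fun j => y n0 * Wt (S j))).
  -
    intros a [phi [_ Hcv]].
    assert (Hcl: forall e, e > 0 -> exists p, Rabs (x p - a) < e).
    { intros e He. destruct (Hcv e He) as [N HN]. exists (phi N). apply (HN N). lia. }
    destruct (Req_dec a 0) as [->|Ha].
    { exists (Cantor.to_nat (2%nat, 0%nat)). unfold g. rewrite Cantor.cancel_of_to. reflexivity. }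
    pose proof (Rabs_pos_lt _ Ha) as Hapos.
    destruct (classic (forall e, e > 0 -> forall K, exists n, (K <= n)%nat /\ exists m, Rabs (y n * w m - a) < e)) as [H2|H2].
    +
      destruct (archimed_cor1 (Rabs a / 8) ltac:(lra)) as [k [Hk Hk0]].
      assert (Hk': / (INR k + 1) < Rabs a / 8).
      { eapply Rle_lt_trans; [|exact Hk]. apply Rinv_le_contravar. apply lt_0_INR; lia. lra. }
      destruct (HLf k) as [N HN].
      destruct (pigeon (Lf k) (fun b e K => exists n, (K <= n)%nat /\ on b n /\ exists m, Rabs (y n * w m - a) < e))
        as [b [Hb HQb]].
      * intros b e e' K K' He HK [n [Hn [On [m Hm]]]]. exists n; split; [lia|split; auto]. exists m; lra.
      * intros e He K. destruct (H2 (Rmin e (Rabs a / 2)) ltac:(apply Rmin_glb_lt; lra) (Nat.max K N))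
          as [n [Hn [m Hm]]].
        pose proof (Rmin_l e (Rabs a / 2)). pose proof (Rmin_r e (Rabs a / 2)).
        assert (exists b, In b (Lf k) /\ on b n) as [b [Hb On]].
        { apply NNPP; intros Hc. assert (Rabs (y n) <= / (INR k + 1)).
          { apply HN; [lia|]. intros b Hb On; apply Hc; eauto. }
          pose proof (Rabs_triang_inv a (y n * w m)).
          rewrite (Rabs_minus_sym a) in H3. rewrite Rabs_mult in H3.
          pose proof (w_bounds m). rewrite (Rabs_right (w m)) in H3 by lra.
          assert (Rabs (y n) * w m <= Rabs (y n) * 2) by (apply Rmult_le_compat_l; [apply Rabs_pos|lra]).
          lra. }
        exists b; split; auto. exists n; split; [lia|split; auto]. exists m; lra.
      * destruct (In_nth _ _ dflt Hb) as [i [_ Hi]].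
        set (c := climit y b). pose proof (climit_spec y b HQ) as Hc. fold c in Hc.
        destruct (scaled c a Ha) as [s Hs].
        { intros e He. destruct (Hc (e/4) ltac:(lra)) as [Nk HNk].
          destruct (HQb (e/2) ltac:(lra) (pref b Nk)) as [n [Hn [[j ->] [m Hm]]]].
          assert (Nk <= j)%nat.
          { destruct (Nat.le_gt_cases Nk j); auto. pose proof (pref_strict b _ _ H). lia. }
          specialize (HNk j H). unfold R_dist in HNk.
          exists m. pose proof (w_bounds m).
          replace (c * w m - a) with ((c - y (pref b j)) * w m + (y (pref b j) * w m - a)) by ring.
          eapply Rle_lt_trans; [apply Rabs_triang|]. rewrite Rabs_mult, (Rabs_right (w m)) by lra.
          rewrite Rabs_minus_sym in HNk.
          assert (Rabs (c - y (pref b j)) * w m <= e/4 * 2) by (apply Rmult_le_compat; try lra; apply Rabs_pos).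
          lra. }
        exists (Cantor.to_nat (1%nat, Cantor.to_nat (Cantor.to_nat (k, i), s))).
        unfold g; cbv zeta; rewrite !Cantor.cancel_of_to; cbn [fst snd]; rewrite ?Cantor.cancel_of_to; cbn [fst snd]. rewrite (Cantor.cancel_of_to (k, i)). cbn [fst snd]. rewrite Hi. fold c. auto.
    +
      apply not_all_ex_not in H2. destruct H2 as [e0 H2]. apply imply_to_and in H2. destruct H2 as [He0 H2].
      apply not_all_ex_not in H2. destruct H2 as [K0 H2].
      destruct (pigeon (seq 0 K0) (fun n e (_:nat) => exists m, Rabs (y n * w m - a) < e)) as [n1 [_ Hn1]].
      * intros n e e' K K' He _ [m Hm]. exists m; lra.
      * intros e He _. destruct (Hcl (Rmin e e0) ltac:(apply Rmin_glb_lt; lra)) as [p Hp].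
        pose proof (Rmin_l e e0). pose proof (Rmin_r e e0).
        rewrite Ex in Hp. unfold T in Hp.
        exists (fst (Cantor.of_nat p)). split.
        { apply in_seq. split; [lia|]. destruct (Nat.lt_ge_cases (fst (Cantor.of_nat p)) K0); [lia|].
          exfalso. apply H2. exists (fst (Cantor.of_nat p)). split; auto. exists (snd (Cantor.of_nat p)). lra. }
        exists (snd (Cantor.of_nat p)). lra.
      * destruct (scaled (y n1) a Ha) as [s Hs].
        { intros e He. apply (Hn1 e He 0%nat). }
        exists (Cantor.to_nat (0%nat, Cantor.to_nat (n1, s))).
        unfold g; cbv zeta; rewrite !Cantor.cancel_of_to; cbn [fst snd]; rewrite ?Cantor.cancel_of_to; cbn [fst snd]. auto.
  - intros i j E. apply Rmult_eq_reg_l in E; auto. simpl in E.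
    assert (INR i + 1 = INR j + 1).
    { pose proof (inv_pos_le1 i). pose proof (inv_pos_le1 j).
      rewrite <- (Rinv_inv (INR i + 1)), <- (Rinv_inv (INR j + 1)). f_equal. lra. }
    apply INR_eq; lra.
  - intros j. exists (fun k => Cantor.to_nat (n0, Cantor.to_nat (j, k))). split.
    + intros k. apply to_nat_mono, to_nat_lt.
    + intros e He. exists 0%nat. intros k _. unfold R_dist. rewrite Ex, T_pair.
      unfold w. rewrite Cantor.cancel_of_to. simpl fst.
      replace (y n0 * Wt (S j) - y n0 * Wt (S j)) with 0 by ring. rewrite Rabs_R0. lra.
Qed.

Theorem proposition3p2 :
  exists M : rseq -> Prop,
    linear_subspace M /\ sup_closed M /\ ~ separable M /\
    (forall x : rseq, M x -> (exists n, x n <> 0) -> L_omega x).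
Proof.
  exists MM. split; [apply MM_linear|split; [apply MM_closed|split; [apply MM_nonsep|]]].
  intros x [y [HM E]] Hn. apply (acc_L_omega y x); auto.
Qed.
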